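(* For every integer $k\ge 1$, let $B_k$ be the graph with vertex set $\{b^i_j \mid i,j\in\{1,\ldots,k\}\}$ in which $b^i_j$ and $b^{i'}_{j'}$ are adjacent if and only if $i\ne i'$ and $j\ne j'$ (i.e. $B_k$ is the complement of the Cartesian product $K_k\square K_k$). Let $\alpha^k$ and $\beta^k$ be the $k$-colorings of $B_k$ given by $\alpha^k(b^i_j)=i$ and $\beta^k(b^i_j)=j$. Then (1) every recoloring sequence from $\alpha^k$ to $\beta^k$ contains a coloring that uses at least $2k-1$ different colors; and (2) there exists a $(2k-1)$-recoloring sequence from $\alpha^k$ to $\beta^k$ of length at most $2k^2$.
   Context: A $k$-coloring of a graph $G$ is a map $V(G)\to\{1,\ldots,k\}$ with adjacent vertices receiving different colors. The set of colors used by a coloring $\gamma$ is $\{\gamma(v)\mid v\in V(G)\}$. The $k$-color graph $\mathcal{C}_k(G)$ has the $k$-colorings of $G$ as vertices, two being adjacent iff they differ on exactly one vertex. A $k$-recoloring sequence from $\alpha$ to $\beta$ of length $m$ is a sequence $\alpha=\alpha_0,\ldots,\alpha_m=\beta$ of $k$-colorings such that for each $i$, either $\alpha_i=\alpha_{i+1}$ or $\alpha_i,\alpha_{i+1}$ are adjacent in $\mathcal{C}_k(G)$. A recoloring sequence is a $k$-recoloring sequence for some integer $k$. *)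

(* Defs.v *)
From mathcomp Require Import all_boot.
Set Implicit Arguments. Unset Strict Implicit. Unset Printing Implicit Defensive.

Definition is_coloring (T : finType) (e : rel T) (m : nat) (c : T -> nat) : Prop :=
  (forall v, 1 <= c v <= m) /\ (forall u v, e u v -> c u != c v).

Definition num_colors (T : finType) (c : T -> nat) : nat :=
  size (undup [seq c v | v <- enum T]).

Definition recoloring_seq (T : finType) (e : rel T) (m : nat)
    (f : nat -> T -> nat) (L : nat) (a b : T -> nat) : Prop :=
  f 0 =1 a /\ f L =1 b /\
  (forall i, i <= L -> is_coloring e m (f i)) /\
  (forall i, i < L -> #|[pred v | f i v != f i.+1 v]| <= 1).

(* The graph B_k: vertex b^i_j is (i,j) (0-based indices); b^i_j ~ b^i'_j'
   iff i != i' and j != j'. *)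
Definition Bk_adj (k : nat) : rel ('I_k * 'I_k) :=
  fun u v => (u.1 != v.1) && (u.2 != v.2).

Definition alphak (k : nat) (v : 'I_k * 'I_k) : nat := (nat_of_ord v.1).+1.
Definition betak (k : nat) (v : 'I_k * 'I_k) : nat := (nat_of_ord v.2).+1.

(* Main.v *)
From Stdlib Require Import Classical.
Require Import Defs.
From mathcomp Require Import all_boot zify.
Set Implicit Arguments. Unset Strict Implicit.

Lemma uniq_num (T : finType) (c : T -> nat) (s : seq T) :
  uniq (map c s) -> size s <= num_colors c.
Proof.
move=> Hu; rewrite /num_colors -(size_map c).
apply: uniq_leq_size => // x /mapP [y _ ->].
by rewrite mem_undup; apply: map_f; rewrite mem_enum.
Qed.

Lemma line k (c : 'I_k * 'I_k -> nat) (Hc : forall u v, Bk_adj u v -> c u != c v) u v :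
  c u = c v -> u.1 = v.1 \/ u.2 = v.2.
Proof.
move=> E; case: (eqVneq u.1 v.1) => [->|H1]; first by left.
case: (eqVneq u.2 v.2) => [->|H2]; first by right.
by have := Hc u v; rewrite /Bk_adj H1 H2 E eqxx => /(_ isT).
Qed.

Definition Bset k (c : 'I_k * 'I_k -> nat) : {set 'I_k} :=
  [set j | [exists i : 'I_k, exists i' : 'I_k, (i != i') && (c (i,j) == c (i',j))]].

Lemma key k (c : 'I_k * 'I_k -> nat) (Hc : forall u v, Bk_adj u v -> c u != c v) :
  0 < k -> #|Bset c| = k.-1 -> 2 * k - 1 <= num_colors c.
Proof.
move=> k0 Hcard.
have [j0 Hj0] : exists j0, j0 \notin Bset c.
  case: (pickP (fun j => j \notin Bset c)) => [j Hj|Hn]; first by exists j.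
  have : Bset c = setT by apply/setP => j; rewrite in_setT; apply: negbFE; exact: Hn j.
  move=> E; rewrite E cardsT card_ord in Hcard; lia.
have HB : forall j, j != j0 -> j \in Bset c.
  have : Bset c == [set~ j0].
    rewrite eqEcard cardsC1 card_ord Hcard leqnn andbT.
    by apply/subsetP => j Hj; rewrite !inE; apply/eqP => E; rewrite -E Hj in Hj0.
  by move/eqP => -> j; rewrite !inE.
have : forall j, exists p : 'I_k * 'I_k, j != j0 -> (p.1 != p.2) && (c (p.1,j) == c (p.2,j)).
  move=> j; case: (eqVneq j j0) => [->|Hj]; first by exists (j0,j0).
  move: (HB j Hj); rewrite inE => /existsP [i /existsP [i' H]]; by exists (i,i').
case/fin_all_exists => w Hw.
pose s : seq ('I_k * 'I_k) := [seq (r, j0) | r <- ord_enum k] ++ [seq ((w j).1, j) | j <- enum (predC1 j0)].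
have -> : 2 * k - 1 = size s.
  rewrite /s size_cat !size_map -(size_map val) val_ord_enum size_iota -cardE cardC1 card_ord; lia.
apply: uniq_num; rewrite map_cat cat_uniq -!map_comp; apply/and3P; split.
- rewrite map_inj_uniq ?ord_enum_uniq // => r r' /= E; apply/eqP; apply: contraT => Hne.
  move: Hj0; rewrite inE => /existsPn /(_ r) /existsPn /(_ r'); by rewrite Hne E eqxx.
- apply/hasPn => x /mapP [j Hj ->]; apply/negP => /mapP [r _ /= E].
  rewrite mem_enum !inE in Hj; move: (Hw j Hj) => /andP [Hne /eqP E2].
  have := line Hc E; have := line Hc (etrans (esym E2) E) => /=.
  case=> [E3|E3]; last by rewrite E3 eqxx in Hj.
  case=> [E4|E4]; last by rewrite E4 eqxx in Hj.
  by rewrite E3 E4 eqxx in Hne.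
- rewrite map_inj_in_uniq ?enum_uniq // => j j' Hj Hj' /= E.
  move: Hj Hj'; rewrite !mem_enum !inE => Hj Hj'.
  case: (eqVneq j j') => // Hne; exfalso.
  move: (Hw j Hj) (Hw j' Hj') => /andP [Hn1 /eqP E1] /andP [_ _].
  have := line Hc E; have := line Hc (etrans (esym E1) E) => /=.
  case=> [E3|E3]; last by rewrite E3 eqxx in Hne.
  case=> [E4|E4]; last by rewrite E4 eqxx in Hne.
  by rewrite E4 -E3 eqxx in Hn1.
Qed.

Lemma diff1 (T : finType) (c c' : T -> nat) :
  #|[pred v | c v != c' v]| <= 1 -> forall x y, c x != c' x -> c y != c' y -> x = y.
Proof.
move=> H x y Hx Hy; apply/eqP; apply: contraT => Hne.
have : #|[set x; y]| <= #|[pred v | c v != c' v]|.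
  by apply: subset_leq_card; apply/subsetP => z; rewrite !inE => /orP [] /eqP ->.
rewrite cards2 Hne; lia.
Qed.

Lemma Bsub k (c c' : 'I_k * 'I_k -> nat) (D : {set 'I_k}) :
  (forall v, v.2 \notin D -> c v = c' v) -> Bset c' \subset D :|: Bset c.
Proof.
move=> HD; apply/subsetP => j; rewrite !inE => /existsP [i /existsP [i' /andP [Hne E]]].
case: (boolP (j \in D)) => //= Hj.
apply/existsP; exists i; apply/existsP; exists i'; rewrite Hne !HD //.
Qed.

Lemma Bstep k (c c' : 'I_k * 'I_k -> nat) :
  #|[pred v | c v != c' v]| <= 1 -> #|Bset c'| <= #|Bset c| + 1.
Proof.
move=> H; have Hd := diff1 H.
case: (pickP [pred v | c v != c' v]) => [x Hx | Hn].
- have : Bset c' \subset [set x.2] :|: Bset c.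
    apply: Bsub => v; rewrite inE => Hv; apply/eqP; apply: contraT => Hv'.
    by rewrite (Hd _ _ Hv' Hx) eqxx in Hv.
  move/subset_leq_card; rewrite cardsU cards1; lia.
- have : Bset c' \subset set0 :|: Bset c.
    apply: Bsub => v _; move: (Hn v) => /= /negbFE /eqP //.
  move/subset_leq_card; rewrite set0U; lia.
Qed.

Definition sched k (t : nat) (v : 'I_k * 'I_k) : nat :=
  let i := nat_of_ord v.1 in let j := nat_of_ord v.2 in
  if k * k + (j * k + i) < t then j.+1
  else if j * k + i < t then (if j < k.-1 then k + 1 + j else j.+1)
  else i.+1.

Lemma sbound k i j : i < k -> j < k -> j * k + i < k * k.
Proof. move=> Hi Hj; have : j.+1 * k <= k * k by rewrite leq_mul2r Hj orbT. rewrite mulSn; lia. Qed.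

Lemma sless k i j i' j' : i' < k -> j' < j -> j' * k + i' < j * k + i.
Proof. move=> Hi Hj; have : j'.+1 * k <= j * k by rewrite leq_mul2r Hj orbT. rewrite mulSn; lia. Qed.

Lemma sinj k i j i' j' : i < k -> i' < k -> j * k + i = j' * k + i' -> i = i' /\ j = j'.
Proof.
move=> Hi Hi' E.
case: (ltngtP j j') => Hj.
- have := @sless k i' j' i j Hi Hj; lia.
- have := @sless k i j i' j' Hi' Hj; lia.
- subst; lia.
Qed.

Lemma sched_col k t : 0 < k -> is_coloring (@Bk_adj k) (2 * k - 1) (sched t).
Proof.
move=> k0; split.
- move=> [[i Hi] [j Hj]]; rewrite /sched /=.
  repeat case: ifP => ?; lia.
- move=> [[i Hi] [j Hj]] [[i' Hi'] [j' Hj']]; rewrite /Bk_adj /= -!val_eqE /= => /andP [H1 H2].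
  rewrite /sched /=.
  have B1 := sbound Hi Hj; have B2 := sbound Hi' Hj'.
  case: (ltngtP j j') => Hjj.
  + have := @sless k i' j' i j Hi Hjj.
    repeat case: ifP => ?; move=> *; apply/eqP; lia.
  + have := @sless k i j i' j' Hi' Hjj.
    repeat case: ifP => ?; move=> *; apply/eqP; lia.
  + subst; by rewrite eqxx in H2.
Qed.

Lemma sched_diff k t : #|[pred v : 'I_k * 'I_k | sched t v != sched t.+1 v]| <= 1.
Proof.
have ltS : forall x, x != t -> (x < t.+1) = (x < t).
  by move=> x Hx; rewrite ltnS leq_eqVlt (negbTE Hx).
apply/card_le1_eqP => [[[i Hi] [j Hj]] [[i' Hi'] [j' Hj']]]; rewrite !inE /sched /= => D1 D2.
have B1 := sbound Hi Hj; have B2 := sbound Hi' Hj'.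
have E1 : (j * k + i = t) \/ (k * k + (j * k + i) = t).
  move: D1; case: (eqVneq (k * k + (j * k + i)) t) => [->|N1]; first by right.
  case: (eqVneq (j * k + i) t) => [->|N2]; first by left.
  by rewrite (ltS _ N1) (ltS _ N2) eqxx.
have E2 : (j' * k + i' = t) \/ (k * k + (j' * k + i') = t).
  move: D2; case: (eqVneq (k * k + (j' * k + i')) t) => [->|N1]; first by right.
  case: (eqVneq (j' * k + i') t) => [->|N2]; first by left.
  by rewrite (ltS _ N1) (ltS _ N2) eqxx.
have E : j * k + i = j' * k + i' by lia.
case: (sinj Hi Hi' E) => Ei Ej; subst.
by congr pair; apply: val_inj.
Qed.

Theorem mainTheorem1 (k : nat) (hk : 1 <= k) :
  (forall (m : nat) (f : nat -> 'I_k * 'I_k -> nat) (L : nat),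
      recoloring_seq (@Bk_adj k) m f L (@alphak k) (@betak k) ->
      exists i, i <= L /\ 2 * k - 1 <= num_colors (f i)) /\
  (exists (f : nat -> 'I_k * 'I_k -> nat) (L : nat),
      L <= 2 * k ^ 2 /\
      recoloring_seq (@Bk_adj k) (2 * k - 1) f L (@alphak k) (@betak k)).
Proof.
split.
- move=> m f L [Hf0 [HfL [Hcol Hdiff]]].
  case: (leqP k 1) => Hk2.
  + exists 0; split => //.
    have /= := @uniq_num _ (f 0) [:: (Ordinal hk, Ordinal hk)] isT; lia.
  + apply: NNPP => Hno.
    have H : forall i, i <= L -> num_colors (f i) < 2 * k - 1.
      move=> i Hi; rewrite ltnNge; apply/negP => Hc; apply: Hno; by exists i.
    have Inv : forall i, i <= L -> #|Bset (f i)| <= k - 2.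
      elim => [_|i IH Hi].
      * have -> : Bset (f 0) = set0; last by rewrite cards0.
        apply/setP => j; rewrite inE in_set0; apply/negbTE; apply/existsPn => i.
        apply/existsPn => i'; apply/negP => /andP [Hne /eqP E].
        rewrite !Hf0 /alphak /= in E; move: Hne; rewrite -val_eqE /=; lia.
      * have h2 := Bstep (Hdiff i Hi); have h1 := IH (ltnW Hi).
        case: (eqVneq #|Bset (f i.+1)| k.-1) => E.
        - have := key (proj2 (Hcol _ Hi)) hk E; have := H _ Hi; lia.
        - lia.
    have := Inv L (leqnn L).
    have -> : Bset (f L) = setT.
      apply/setP => j; rewrite in_setT inE; apply/existsP; exists (Ordinal hk).
      apply/existsP; exists (Ordinal Hk2); rewrite !HfL /betak eqxx andbT -val_eqE //.
    rewrite cardsT card_ord; lia.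
- exists (@sched k), (2 * k ^ 2); split => //; split; [|split; [|split]].
  + by move=> v; rewrite /sched !ltn0.
  + move=> [i j]; rewrite /sched /betak /=.
    have h := sbound (ltn_ord i) (ltn_ord j).
    have -> : k * k + (j * k + i) < 2 * k ^ 2 by rewrite -mulnn; lia.
    by [].
  + move=> i _; exact: sched_col.
  + move=> i _; exact: sched_diff.
Qed.
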